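(* Let $v$ be a typical weight and let $X$ be an initial space such that for every $f\in X$ and $0\le r<1$ the function $f_r(z)=f(rz)$ is in $X$ and $\sup_{0\le r<1}\|f_r\|_X\le C\|f\|_X$ for a constant $C$ independent of $f$. Let $T$ be an intrinsic operator on $\mathcal{H}(\mathbb{D})$ such that $T:X\to H_v$ is bounded and $Tf_r\in H_{v,0}$ for all $f\in X$, $0\le r<1$. Then the following are equivalent: (i) $T:X\to H_v$ is compact; (ii) $T:X\to H_{v,0}$ is compact; (iii) $\lim_{|z|\to1}v(z)\|T^*K_z^H\|=0$.
   Context: $\mathcal{H}(\mathbb{D})$ is the space of holomorphic functions on the unit disk $\mathbb{D}$ with the topology $\tau_{uc}$ of uniform convergence on compact subsets. A linear operator $T$ on $\mathcal{H}(\mathbb{D})$ is intrinsic if it maps $\tau_{uc}$-convergent sequences to $\tau_{uc}$-convergent sequences. An initial space is a Banach space $X\subset\mathcal{H}(\mathbb{D})$ containing the polynomials such that every sequence in the closed unit ball of $X$ has a subsequence converging in $\tau_{uc}$ to some function in $X$. A typical weight is a continuous radial $v:\mathbb{D}\to(0,1]$, non-increasing in $|z|$, with $v(z)\to0$ as $|z|\to1$. $H_v=\{f:\sup_z v(z)|f(z)|<\infty\}$ with that supremum as norm, $H_{v,0}=\{f:\lim_{|z|\to1}v(z)|f(z)|=0\}$ (closed subspace). $K_z^H$ is the point evaluation $g\mapsto g(z)$ on $H_v$ and $T^*:H_v^*\to X^*$ the adjoint of $T:X\to H_v$. *)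

(* Defs.v *)
From HB Require Import structures.
From mathcomp Require Import all_boot all_order all_algebra.
From mathcomp Require Import complex.
From mathcomp Require Import all_classical all_reals all_analysis.
Import Order.TTheory GRing.Theory Num.Theory.
Import numFieldNormedType.Exports.
Import Normc.

Set Implicit Arguments.
Unset Strict Implicit.
Unset Printing Implicit Defensive.

Local Open Scope ring_scope.
Local Open Scope classical_set_scope.

(* Complex numbers are R[i] for R : realType; |z| is  normc z : R.
   Functions on the disk are represented by functions R[i] -> R[i];
   only their values on the open unit disk matter. *)

Section Defs.
Variable R : realType.
Local Notation C := R[i].

Definition disk : set C := [set z | normc z < 1].

Definition holomorphic (f : C -> C) : Prop :=
  forall z, disk z -> exists d : C, forall e : R, 0 < e ->
    exists del : R, 0 < del /\
      forall h : C, disk (z + h) -> 0 < normc h -> normc h < del ->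
        normc (f (z + h) - f z - d * h) <= e * normc h.

Definition uc_cvg (fs : nat -> C -> C) (f : C -> C) : Prop :=
  forall K : set C, @compact (R[i] : numFieldType) K -> K `<=` disk ->
    forall e : R, 0 < e -> exists N : nat, forall n : nat, (N <= n)%N ->
      forall z, K z -> normc (fs n z - f z) <= e.

Definition subseq_map (phi : nat -> nat) : Prop :=
  forall m n : nat, (m < n)%N -> (phi m < phi n)%N.

Definition linear_on_H (T : (C -> C) -> C -> C) : Prop :=
  (forall f, holomorphic f -> holomorphic (T f)) /\
  (forall (a : C) f g, holomorphic f -> holomorphic g ->
     forall z, disk z -> T (fun w => a * f w + g w) z = a * T f z + T g z).

Definition intrinsic (T : (C -> C) -> C -> C) : Prop :=
  linear_on_H T /\
  forall (fs : nat -> C -> C) (f : C -> C),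
    (forall n, holomorphic (fs n)) -> holomorphic f -> uc_cvg fs f ->
    exists g : C -> C, uc_cvg (fun n => T (fs n)) g.

Definition banach_subspace (Xs : set (C -> C)) (nX : (C -> C) -> R) : Prop :=
  [/\ Xs `<=` holomorphic,
      Xs (fun _ => 0),
      (forall (a : C) f g, Xs f -> Xs g -> Xs (fun w => a * f w + g w)),
      [/\ (forall f, Xs f -> 0 <= nX f /\ (nX f = 0 <-> forall z, disk z -> f z = 0)),
          (forall (a : C) f, Xs f -> nX (fun w => a * f w) = normc a * nX f) &
          (forall f g, Xs f -> Xs g -> nX (fun w => f w + g w) <= nX f + nX g)] &
      (forall fs : nat -> C -> C, (forall n, Xs (fs n)) ->
         (forall e : R, 0 < e -> exists N : nat, forall m n : nat,
            (N <= m)%N -> (N <= n)%N -> nX (fun w => fs m w - fs n w) <= e) ->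
         exists f, Xs f /\
           (forall e : R, 0 < e -> exists N : nat, forall n : nat,
              (N <= n)%N -> nX (fun w => fs n w - f w) <= e))].

Definition initial_space (Xs : set (C -> C)) (nX : (C -> C) -> R) : Prop :=
  [/\ banach_subspace Xs nX,
      (forall p : {poly C}, Xs (fun z => p.[z])) &
      (forall fs : nat -> C -> C, (forall n, Xs (fs n) /\ nX (fs n) <= 1) ->
         exists phi, subseq_map phi /\
           exists f, Xs f /\ uc_cvg (fun n => fs (phi n)) f)].

Definition typical_weight (v : C -> R) : Prop :=
  [/\ (forall z, disk z -> forall e : R, 0 < e -> exists del : R, 0 < del /\
         forall w, disk w -> normc (w - z) < del -> `|v w - v z| < e),
      (forall z, disk z -> 0 < v z <= 1),
      (forall z w, disk z -> disk w -> normc z = normc w -> v z = v w),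
      (forall z w, disk z -> disk w -> normc z <= normc w -> v w <= v z) &
      (forall e : R, 0 < e -> exists r : R, r < 1 /\
         forall z, disk z -> r < normc z -> v z < e)].

Definition vnorm (v : C -> R) (f : C -> C) : R :=
  sup [set v z * normc (f z) | z in disk].

Definition Hv (v : C -> R) (f : C -> C) : Prop :=
  holomorphic f /\ exists M : R, forall z, disk z -> v z * normc (f z) <= M.

Definition Hv0 (v : C -> R) (f : C -> C) : Prop :=
  holomorphic f /\ forall e : R, 0 < e -> exists r : R, r < 1 /\
    forall z, disk z -> r < normc z -> v z * normc (f z) < e.

Definition dil (r : R) (f : C -> C) : C -> C := fun z => f ((r%:C)%C * z).

Definition bounded_into_Hv (Xs : set (C -> C)) (nX : (C -> C) -> R)
    (v : C -> R) (T : (C -> C) -> C -> C) : Prop :=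
  (forall f, Xs f -> Hv v (T f)) /\
  exists M : R, forall f, Xs f -> vnorm v (T f) <= M * nX f.

(* T : X -> Y (Y = H_v or H_{v,0}, with the H_v norm) is compact:
   T maps X into Y and the image of every sequence of the closed unit ball
   of X has a subsequence converging in norm to an element of Y *)
Definition compact_op (Xs : set (C -> C)) (nX : (C -> C) -> R)
    (v : C -> R) (Y : set (C -> C)) (T : (C -> C) -> C -> C) : Prop :=
  (forall f, Xs f -> Y (T f)) /\
  forall fs : nat -> C -> C, (forall n, Xs (fs n) /\ nX (fs n) <= 1) ->
    exists phi, subseq_map phi /\ exists g, Y g /\
      (fun n => vnorm v (fun w => T (fs (phi n)) w - g w)) @ \oo --> (0 : R).

(* || T^* K_z^H ||_{X^*} = sup_{||f||_X <= 1} |(T f)(z)| *)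
Definition adj_eval_norm (Xs : set (C -> C)) (nX : (C -> C) -> R)
    (T : (C -> C) -> C -> C) (z : C) : R :=
  sup [set normc (T f z) | f in [set f | Xs f /\ nX f <= 1]].

End Defs.

(* Main.v *)
Require Import Defs.
From HB Require Import structures.
From mathcomp Require Import all_boot all_order all_algebra.
From mathcomp Require Import complex.
From mathcomp Require Import all_classical all_reals all_analysis.
From mathcomp Require Import ring lra zify.
Import Order.TTheory GRing.Theory Num.Theory.
Import numFieldNormedType.Exports.
Import Normc.
Local Open Scope ring_scope.
Local Open Scope classical_set_scope.
Local Open Scope complex_scope.
Section Basics.
Variable R : realType.
Local Notation C := R[i].
Local Notation CT := (R[i] : numFieldType).

Lemma normc_ge0 (z : C) : 0 <= normc z.
Proof. by case: z => a b; rewrite /normc sqrtr_ge0. Qed.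

Lemma normcR (a : R) : normc (a%:C : C) = `|a|.
Proof. by rewrite /normc /= expr0n /= addr0 sqrtr_sqr. Qed.

Lemma normC_def (z : C) : `|z| = (normc z)%:C.
Proof. by []. Qed.

Lemma normcD (x y : C) : normc (x + y) <= normc x + normc y.
Proof. exact: le_normcD. Qed.

Lemma normcN' (x : C) : normc (- x) = normc x.
Proof. exact: normcN. Qed.

Lemma normcB (x y : C) : normc (x - y) = normc (y - x).
Proof. by rewrite -normcN' opprB. Qed.

Lemma normcM' (x y : C) : normc (x * y) = normc x * normc y.
Proof. exact: normcM. Qed.

Lemma normc_eq0 (x : C) : (normc x = 0) <-> x = 0.
Proof. split; first exact: eq0_normc. by move=> ->; rewrite normc0. Qed.

Lemma ltcR' (a b : R) : ((a%:C : C) < b%:C) = (a < b).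
Proof. exact: ltcR. Qed.

Lemma gt0C (e : C) : 0 < e -> e = (complex.Re e)%:C /\ 0 < complex.Re e.
Proof.
case: e => a b; rewrite ltcE /= => /andP[/eqP -> h]; split => //.
Qed.


Lemma ltc0R (a : R) : ((0 : C) < a%:C) = (0 < a).
Proof. by rewrite ltcE /= eqxx. Qed.

Lemma nbhsC (x : CT) (P : set CT) :
  (exists2 e : R, 0 < e & forall y, normc (x - y) < e -> P y) -> nbhs x P.
Proof.
move=> [e e0 He]; apply/nbhs_ballP; exists e%:C; first by rewrite /= ltc0R.
by move=> y; rewrite -ball_normE /= normC_def ltcR; exact: He.
Qed.

Lemma nbhsCp (x : CT) (P : set CT) : nbhs x P ->
  exists2 e : R, 0 < e & forall y, normc (x - y) < e -> P y.
Proof.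
move/nbhs_ballP => [e /gt0C [E e0] He]; exists (complex.Re e) => // y hy.
by apply: He; rewrite -ball_normE /= normC_def E ltcR.
Qed.

Lemma nbhsR (x : R) (P : set R) :
  (exists2 e : R, 0 < e & forall y, `|x - y| < e -> P y) -> nbhs x P.
Proof.
move=> [e e0 He]; apply/nbhs_ballP; exists e => //.
Qed.

Lemma nbhsRp (x : R) (P : set R) : nbhs x P ->
  exists2 e : R, 0 < e & forall y, `|x - y| < e -> P y.
Proof.
move/nbhs_ballP => [e e0 He]; exists e => //.
Qed.
Lemma realC_cont : continuous (fun a : R => (a%:C : CT)).
Proof.
move=> x P /nbhsCp [e e0 He]; apply: nbhsR; exists e => // y hy.
by apply: He; rewrite -rmorphB normcR.
Qed.

Definition pC (x : R * R) : CT := x.1%:C + 'i%C * x.2%:C.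

Lemma pC_cont : continuous pC.
Proof.
move=> [a b]; rewrite /pC.
apply: cvgD.
  apply: (@cvg_comp _ _ _ fst (fun a : R => (a%:C : CT)) _ (nbhs a)); first exact: cvg_fst.
  exact: realC_cont.
apply: cvgM; first exact: cvg_cst.
apply: (@cvg_comp _ _ _ snd (fun a : R => (a%:C : CT)) _ (nbhs b)); first exact: cvg_snd.
exact: realC_cont.
Qed.
Definition Kd (r : R) : set CT := [set z | normc z <= r].

Lemma Kd_closed r : closed (Kd r).
Proof.
move=> x Hx; rewrite /Kd /=; rewrite leNgt; apply/negP => xr.
have [y [Ay By]] : (Kd r `&` [set y | normc (x - y) < normc x - r]) !=set0.
  apply: Hx; apply: nbhsC; exists (normc x - r); first by rewrite subr_gt0.
  by move=> y.
move: Ay By; rewrite /Kd /= => Ay By.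
have := normcD (x - y) y; rewrite subrK => h.
move: xr; lra.
Qed.

Lemma re_le_normc (a b : R) : `|a| <= normc (a +i* b).
Proof.
rewrite /normc -sqrtr_sqr ler_wsqrtr // lerDl sqr_ge0 //.
Qed.

Lemma im_le_normc (a b : R) : `|b| <= normc (a +i* b).
Proof.
rewrite /normc -sqrtr_sqr ler_wsqrtr // lerDr sqr_ge0 //.
Qed.

Lemma pC_eq (a b : R) : pC (a, b) = a +i* b.
Proof. by rewrite /pC /=; simpc. Qed.

Lemma Kd_compact r : compact (Kd r).
Proof.
apply: (@subclosed_compact _ _ (pC @` (`[-`|r|, `|r|] `*` `[-`|r|, `|r|]))).
- exact: Kd_closed.
- apply: continuous_compact; last exact: compact_setX (@segment_compact _ _ _) (@segment_compact _ _ _).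
  apply: continuous_subspaceT => x; exact: pC_cont.
- case=> a b; rewrite /Kd /= => h; exists (a, b); last exact: pC_eq.
  split => /=; rewrite in_itv /= -ler_norml.
    exact: le_trans (re_le_normc a b) (le_trans h (ler_norm r)).
  exact: le_trans (im_le_normc a b) (le_trans h (ler_norm r)).
Qed.
Lemma rev_tri (a b : C) : `|normc a - normc b| <= normc (a - b).
Proof.
have h1 := normcD (a - b) b; have h2 := normcD (b - a) a.
rewrite subrK in h1; rewrite subrK in h2; rewrite normcB in h2.
rewrite ler_norml; apply/andP; split; lra.
Qed.

Lemma holo_cont (f : C -> C) z : holomorphic f -> disk z ->
  forall e : R, 0 < e -> exists2 del : R, 0 < del &
    forall w, disk w -> normc (w - z) < del -> normc (f w - f z) < e.
Proof.
move=> hf dz e e0; have [d Hd] := hf z dz.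
have [del0 [del00 Hdel]] := Hd 1 ltr01.
have nd0 := normc_ge0 d.
have k0 : 0 < e / (normc d + 1) by apply: divr_gt0 => //; lra.
exists (Num.min del0 (e / (normc d + 1))); first by rewrite lt_min del00 k0.
move=> w dw; rewrite lt_min => /andP[h1 h2].
have [wz|wz] := eqVneq w z; first by rewrite wz subrr normc0.
have hp : 0 < normc (w - z).
  rewrite lt_neqAle normc_ge0 andbT eq_sym; apply/negP => /eqP/normc_eq0/eqP.
  by rewrite subr_eq0 (negbTE wz).
have := Hdel (w - z); rewrite addrC subrK => /(_ dw hp h1); rewrite mul1r => H.
have t := normcD (f w - f z - d * (w - z)) (d * (w - z)).
rewrite subrK normcM in t.
have : (normc d + 1) * normc (w - z) < e.
  by rewrite mulrC -ltr_pdivlMr //; lra.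
have := normc_ge0 (w - z); nra.
Qed.
Lemma holo_bdd (f : C -> C) r : holomorphic f -> r < 1 ->
  exists M : R, forall z, normc z <= r -> normc (f z) <= M.
Proof.
move=> hf r1.
pose g := fun z : CT => normc (f z).
have gc : {within Kd r, continuous g}.
  apply: continuous_in_subspaceT => x; rewrite inE /Kd /= => xr.
  have dx : disk x by rewrite /disk /=; lra.
  move=> P /nbhsRp [e e0 He]; apply: nbhsC.
  have [del del0 Hdel] := @holo_cont f x hf dx e e0.
  have k0 : 0 < 1 - normc x by lra.
  exists (Num.min del (1 - normc x)); first by rewrite lt_min del0 k0.
  move=> y; rewrite lt_min => /andP[h1 h2]; apply: He.
  have dy : disk y.
    rewrite /disk /=; have := normcD (y - x) x; rewrite subrK normcB; lra.
  apply: le_lt_trans (rev_tri _ _) _; rewrite normcB; apply: Hdel => //.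
  by rewrite normcB.
have := compact_bounded (continuous_compact gc (Kd_compact r)).
move=> [M0 [_ HM]]; exists (M0 + 1) => z zr.
have := HM (M0 + 1); rewrite ltrDl ltr01 => /(_ isT (g z)).
move=> h; apply: le_trans (ler_norm _) (h _); by exists z.
Qed.
Lemma cvg0P (u : nat -> R) : u @ \oo --> (0 : R) <->
  forall e : R, 0 < e -> exists N : nat, forall n, (N <= n)%N -> `|u n| < e.
Proof.
split.
  move/cvgrPdist_lt => H e e0; have := H e e0.
  move=> [N _ HN]; exists N => n hn; rewrite -(normrN (u n)) -sub0r; exact: HN.
move=> H; apply/cvgrPdist_lt => e e0; have [N HN] := H e e0.
exists N => // n hn /=; rewrite sub0r normrN; exact: HN.
Qed.
Lemma sup_ub' (S : set R) x M : (forall y, S y -> y <= M) -> S x -> x <= sup S.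
Proof. by move=> hM Sx; apply: ub_le_sup => //; exists M. Qed.

Lemma sup_le' (S : set R) b : S !=set0 -> (forall y, S y -> y <= b) -> sup S <= b.
Proof. by move=> hS hb; apply: ge_sup. Qed.

Lemma sup_gt (S : set R) x : S !=set0 -> x < sup S -> exists y, S y /\ x < y.
Proof.
move=> hS hx; apply: contrapT => H.
have : sup S <= x.
  apply: sup_le' => // y Sy; rewrite leNgt; apply/negP => xy; apply: H; by exists y.
by rewrite leNgt hx.
Qed.

Lemma disk0 : disk (0 : C).
Proof. by rewrite /disk /= expr0n /= addr0 sqrtr0 ltr01. Qed.

Definition vbdd (v : C -> R) (h : C -> C) :=
  exists M : R, forall z, disk z -> v z * normc (h z) <= M.

Lemma vnorm_ub (v : C -> R) (h : C -> C) (z : C) : vbdd v h -> disk z -> v z * normc (h z) <= vnorm v h.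
Proof.
move=> [M HM] dz; rewrite /vnorm; apply: ub_le_sup; last by exists z.
by exists M => y [w dw <-]; exact: HM.
Qed.

Lemma vnorm_le (v : C -> R) (h : C -> C) (b : R) : (forall z, disk z -> v z * normc (h z) <= b) -> vnorm v h <= b.
Proof.
move=> hb; apply: sup_le'; first by exists (v 0 * normc (h 0)), 0 => //; exact: disk0.
by move=> y [w dw <-]; exact: hb.
Qed.

Lemma vnorm_ge0 (v : C -> R) (h : C -> C) : (forall z, disk z -> 0 <= v z) -> vbdd v h -> 0 <= vnorm v h.
Proof.
move=> v0 hb; apply: le_trans (vnorm_ub _ _ _ hb disk0).
by apply: mulr_ge0; [exact: v0 disk0 | exact: normc_ge0].
Qed.

Lemma vbdd_sub (v : C -> R) (f g : C -> C) : (forall z, disk z -> 0 <= v z) -> vbdd v f -> vbdd v g ->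
  vbdd v (fun w => f w - g w).
Proof.
move=> v0 [M1 H1] [M2 H2]; exists (M1 + M2) => z dz.
have t := normcD (f z) (- g z); rewrite normcN in t.
have := H1 z dz; have := H2 z dz; have := v0 z dz.
move=> a b c; apply: le_trans (_ : v z * (normc (f z) + normc (g z)) <= _).
  by apply: ler_wpM2l.
by rewrite mulrDr; lra.
Qed.
Set Implicit Arguments.
Unset Strict Implicit.
Section Main.
Variables (v : C -> R) (Xs : set (C -> C)) (nX : (C -> C) -> R)
  (T : (C -> C) -> C -> C).
Hypothesis Htw : typical_weight v.
Hypothesis Hi : initial_space Xs nX.
Hypothesis Hint : intrinsic T.
Hypothesis Hb : bounded_into_Hv Xs nX v T.

Lemma v_pos z : disk z -> 0 < v z.
Proof. by case: Htw => _ h _ _ _ /h /andP[]. Qed.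

Lemma v_le1 z : disk z -> v z <= 1.
Proof. by case: Htw => _ h _ _ _ /h /andP[]. Qed.

Lemma v_ge0 z : disk z -> 0 <= v z.
Proof. by move=> /v_pos /ltW. Qed.

Lemma Xs_holo f : Xs f -> holomorphic f.
Proof. by case: Hi => -[h _ _ _ _] _ _; exact: h. Qed.

Lemma Xs0 : Xs (fun _ => 0).
Proof. by case: Hi => -[_ h _ _ _] _ _. Qed.

Lemma Xs_lin a f g : Xs f -> Xs g -> Xs (fun w => a * f w + g w).
Proof. by case: Hi => -[_ _ h _ _] _ _; exact: h. Qed.

Lemma nX_ge0 f : Xs f -> 0 <= nX f.
Proof. by case: Hi => -[_ _ _ [h _ _] _] _ _ /h []. Qed.

Lemma nX_eq0 f : Xs f -> (forall z, disk z -> f z = 0) -> nX f = 0.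
Proof. by case: Hi => -[_ _ _ [h _ _] _] _ _ /h [_ []] _ H /H. Qed.

Lemma nX_scale a f : Xs f -> nX (fun w => a * f w) = normc a * nX f.
Proof. by case: Hi => -[_ _ _ [_ h _] _] _ _; exact: h. Qed.

Lemma nX_tri f g : Xs f -> Xs g -> nX (fun w => f w + g w) <= nX f + nX g.
Proof. by case: Hi => -[_ _ _ [_ _ h] _] _ _; exact: h. Qed.

Lemma Xs_scale a f : Xs f -> Xs (fun w => a * f w).
Proof.
move=> hf; have := Xs_lin a hf Xs0.
by have -> : (fun w => a * f w + 0) = (fun w => a * f w) by apply: funext => w; rewrite addr0.
Qed.

Lemma Xs_sub f g : Xs f -> Xs g -> Xs (fun w => f w - g w).
Proof.
move=> hf hg; have := Xs_lin (-1) hg hf.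
by have -> : (fun w => -1 * g w + f w) = (fun w => f w - g w) by apply: funext => w; ring.
Qed.

Lemma nX_sub f g : Xs f -> Xs g -> nX (fun w => f w - g w) <= nX f + nX g.
Proof.
move=> hf hg; have := nX_tri hf (Xs_scale (-1) hg).
have -> : (fun w => f w + -1 * g w) = (fun w => f w - g w) by apply: funext => w; ring.
by rewrite nX_scale // normcN normc1 mul1r.
Qed.

Lemma T_lin a f g z : Xs f -> Xs g -> disk z ->
  T (fun w => a * f w + g w) z = a * T f z + T g z.
Proof.
move=> hf hg dz; case: Hint => -[_ h] _; apply: h => //; exact: Xs_holo.
Qed.

Lemma T_Hv f : Xs f -> Hv v (T f).
Proof. by case: Hb => h _; exact: h. Qed.

Lemma T_vbdd f : Xs f -> vbdd v (T f).
Proof. by move=> /T_Hv []. Qed.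

Lemma T_bd : exists M : R, 0 <= M /\ forall f, Xs f -> vnorm v (T f) <= M * nX f.
Proof.
case: Hb => _ [M HM]; exists (Num.max M 0); split; first by rewrite le_max lexx orbT.
move=> f hf; apply: le_trans (HM f hf) _; apply: ler_wpM2r; first exact: nX_ge0.
by rewrite le_max lexx.
Qed.

Lemma T_zero h : Xs h -> (forall z, disk z -> h z = 0) -> forall z, disk z -> T h z = 0.
Proof.
move=> hh h0 z dz; have [M [M0 HM]] := T_bd.
have := HM h hh; rewrite nX_eq0 // mulr0 => hn.
have := vnorm_ub _ _ _ (T_vbdd hh) dz => hz.
have hv := v_pos dz; have hn0 := normc_ge0 (T h z).
apply/normc_eq0; apply/eqP; rewrite eq_le hn0 andbT.
rewrite -(pmulr_rle0 _ hv); exact: le_trans hz hn.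
Qed.

Lemma T0 z : disk z -> T (fun _ => 0) z = 0.
Proof. by apply: T_zero; [exact: Xs0 | by []]. Qed.

Lemma T_scale a f z : Xs f -> disk z -> T (fun w => a * f w) z = a * T f z.
Proof.
move=> hf dz; have := T_lin a hf Xs0 dz; rewrite T0 // addr0.
by have -> : (fun w => a * f w + 0) = (fun w => a * f w) by apply: funext => w; rewrite addr0.
Qed.

Lemma T_sub f g z : Xs f -> Xs g -> disk z -> T (fun w => f w - g w) z = T f z - T g z.
Proof.
move=> hf hg dz; have := T_lin (-1) hg hf dz.
have -> : (fun w => -1 * g w + f w) = (fun w => f w - g w) by apply: funext => w; ring.
by move=> ->; ring.
Qed.
Local Notation adj := (adj_eval_norm Xs nX T).
Local Notation ball1 := [set f | Xs f /\ nX f <= 1].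

Lemma adj_bdd z : disk z -> exists M : R, forall f, Xs f -> nX f <= 1 ->
  normc (T f z) <= M.
Proof.
move=> dz; have [M [M0 HM]] := T_bd; exists (M / v z) => f hf h1.
have hv := v_pos dz.
rewrite ler_pdivlMr // mulrC.
apply: le_trans (vnorm_ub _ _ _ (T_vbdd hf) dz) _.
apply: le_trans (HM f hf) _; rewrite -[leRHS]mulr1; exact: ler_wpM2l.
Qed.

Lemma adj_ub f z : Xs f -> nX f <= 1 -> disk z -> normc (T f z) <= adj z.
Proof.
move=> hf h1 dz; have [M HM] := adj_bdd dz.
rewrite /adj_eval_norm; apply: ub_le_sup; last by exists f.
by exists M => y [g [hg hg1] <-]; exact: HM.
Qed.

Lemma adj_ne z : [set normc (T f z) | f in ball1] !=set0.
Proof.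
exists (normc (T (fun _ => 0) z)), (fun _ => 0) => //; split; first exact: Xs0.
by rewrite nX_eq0 //; exact: Xs0.
Qed.

Lemma adj_ge0 z : disk z -> 0 <= adj z.
Proof.
move=> dz; apply: le_trans (adj_ub (f := fun _ => 0) Xs0 _ dz).
  exact: normc_ge0.
by rewrite nX_eq0 //; exact: Xs0.
Qed.

Lemma adj_scale h c z : Xs h -> 0 < c -> nX h <= c -> disk z ->
  normc (T h z) <= c * adj z.
Proof.
move=> hh c0 hc dz.
have ci : 0 <= c^-1 by rewrite invr_ge0 ltW.
have hu := Xs_scale (c^-1)%:C hh.
have n1 : nX (fun w => (c^-1)%:C * h w) <= 1.
  rewrite nX_scale // normcR (ger0_norm ci).
  by rewrite ler_pdivrMl // mulr1.
have := adj_ub hu n1 dz; rewrite T_scale // normcM normcR (ger0_norm ci).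
by rewrite ler_pdivrMl.
Qed.
Lemma T_cvg fs f : (forall n, Xs (fs n)) -> Xs f -> uc_cvg fs f ->
  uc_cvg (fun n => T (fs n)) (T f).
Proof.
move=> Xfs Xf Hfs.
pose h n := fun w => fs n w - f w.
pose k n := if odd n then h n./2 else (fun _ : C => 0 : C).
have Xk n : Xs (k n).
  by rewrite /k; case: ifP => _; [exact: Xs_sub | exact: Xs0].
have kc : uc_cvg k (fun _ => 0).
  move=> K cK sK e e0; have [N HN] := Hfs K cK sK e e0; exists N.*2 => n hn z Kz.
  rewrite /k; case: ifP => _; rewrite subr0.
    apply: HN => //; rewrite -(doubleK N); exact: half_leq.
  have n0 : normc (0 : C) = 0 by exact/normc_eq0.
  by rewrite n0; exact: ltW.
have [g Hg] := Hint.2 k (fun _ => 0) (fun n => Xs_holo (Xk n)) (Xs_holo Xs0) kc.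
move=> K cK sK e e0.
have e20 : 0 < e / 2 by rewrite divr_gt0.
have [N HN] := Hg K cK sK (e / 2) e20.
exists N => n hn z Kz.
have dz := sK z Kz.
have h1 := HN n.*2.+1 ltac:(lia) z Kz.
have h2 := HN n.*2 ltac:(lia) z Kz.
move: h1 h2; rewrite /k /= odd_double /= uphalf_double /h T_sub // T0 // sub0r normcN => h1 h2.
have := normcD (T (fs n) z - T f z - g z) (g z); rewrite subrK; lra.
Qed.
Lemma Hv_vbdd f : Hv v f -> vbdd v f.
Proof. by case. Qed.

Lemma Hv0_Hv g : Hv0 v g -> Hv v g.
Proof.
move=> [hg H0]; split => //.
have [r0 [r01 Hr]] := H0 1 ltr01.
have [M HM] := @holo_bdd g r0 hg r01.
exists (Num.max 1 M) => z dz.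
have v1 := v_le1 dz; have v0 := v_ge0 dz; have n0 := normc_ge0 (g z).
have [zr|zr] := leP (normc z) r0.
  have := HM z zr => hM.
  rewrite le_max; apply/orP; right.
  apply: le_trans hM; rewrite -[leRHS]mul1r; exact: ler_wpM2r.
by rewrite le_max; apply/orP; left; apply: ltW; exact: Hr.
Qed.

Lemma Hv0_closed (hs : nat -> C -> C) g : (forall n, Hv v (hs n)) ->
  (forall n, Hv0 v (hs n)) -> Hv v g ->
  (fun n => vnorm v (fun w => hs n w - g w)) @ \oo --> (0 : R) -> Hv0 v g.
Proof.
move=> H1 H2 Hg /cvg0P Hc; split; first by case: Hg.
move=> e e0; have e20 : 0 < e / 2 by rewrite divr_gt0.
have [N HN] := Hc _ e20.
have := HN N (leqnn N) => hN.
have [_ H0] := H2 N; have [r [r1 Hr]] := H0 _ e20.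
exists r; split => // z dz rz.
have hb := vbdd_sub v _ _ v_ge0 (Hv_vbdd (H1 N)) (Hv_vbdd Hg).
have := vnorm_ub _ _ _ hb dz => hu.
have := Hr z dz rz => hr.
have t := normcD (hs N z - g z) (- hs N z); rewrite normcN in t.
have -> : g z = - (hs N z - g z + - hs N z) by ring.
rewrite normcN.
have := v_ge0 dz => v0.
have := ler_norm (vnorm v (fun w => hs N w - g w)) => hn.
apply: (@le_lt_trans _ _ (v z * (normc (hs N z - g z) + normc (hs N z)))).
  exact: ler_wpM2l.
rewrite mulrDr; lra.
Qed.
Lemma P2_P0 : (forall e : R, 0 < e -> exists r : R, r < 1 /\
    forall z, disk z -> r < normc z -> v z * adj z < e) ->
  compact_op Xs nX v (Hv v) T.
Proof.
move=> H3; split; first exact: T_Hv.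
move=> fs Hfs.
case: Hi => _ _ Hc; have [phi [sphi [f [Xf Hf]]]] := Hc fs Hfs.
exists phi; split => //; exists (T f); split; first exact: T_Hv.
apply/cvg0P => e e0.
have nf0 := nX_ge0 Xf.
pose c := nX f + 2.
have c0 : 0 < c by rewrite /c; lra.
have e'0 : 0 < e / 2 / c by rewrite !divr_gt0.
have [r [r1 Hr]] := H3 _ e'0.
have XFn n : Xs (fs (phi n)) by case: (Hfs (phi n)).
have Tc := T_cvg XFn Xf Hf.
have sK : Kd r `<=` @disk R by move=> z; rewrite /Kd /disk /=; lra.
have e20 : 0 < e / 2 by rewrite divr_gt0.
have [N HN] := Tc (Kd r) (Kd_compact r) sK (e / 2) e20.
exists N => n hn.
have hb := vbdd_sub v _ _ v_ge0 (T_vbdd (XFn n)) (T_vbdd Xf).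
have vn0 := vnorm_ge0 v _ v_ge0 hb; rewrite ger0_norm //.
apply: (@le_lt_trans _ _ (e / 2)); last by lra.
apply: vnorm_le => z dz.
have v1 := v_le1 dz; have v0 := v_ge0 dz.
have n0 := normc_ge0 (T (fs (phi n)) z - T f z).
have [zr|zr] := leP (normc z) r.
  have := HN n hn z zr; nra.
rewrite -T_sub //.
have hn1 : nX (fun w => fs (phi n) w - f w) <= c.
  apply: le_trans (nX_sub (XFn n) Xf) _; rewrite /c.
  have := (Hfs (phi n)).2; lra.
have := adj_scale (Xs_sub (XFn n) Xf) c0 hn1 dz => ha.
have := Hr z dz zr => hr.
have ce : c * (e / 2 / c) = e / 2 by rewrite mulrC divfK // lt0r_neq0.
have a0 := adj_ge0 dz.
apply: (@le_trans _ _ (v z * (c * adj z))); first exact: ler_wpM2l.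
rewrite -ce mulrCA; apply: ltW; rewrite ltr_pM2l //.
Qed.
Lemma subseq_ge phi : subseq_map phi -> forall n, (n <= phi n)%N.
Proof.
move=> sp; elim=> [|n IH] //; have := sp n n.+1 (ltnSn n); lia.
Qed.

Lemma rn_lt1 (n : nat) : 1 - (n.+1%:R : R)^-1 < 1.
Proof. by rewrite ltrBlDr ltrDl invr_gt0 ltr0n. Qed.

Lemma rn_mono (m n : nat) : (m <= n)%N -> 1 - (m.+1%:R : R)^-1 <= 1 - (n.+1%:R)^-1.
Proof.
move=> mn; rewrite lerD2l lerN2 lef_pV2 ?posrE ?ltr0n // ler_nat; lia.
Qed.

Lemma rn_big (r0 : R) : r0 < 1 -> exists K : nat, r0 < 1 - (K.+1%:R)^-1.
Proof.
move=> r01; have h0 : 0 <= (1 - r0)^-1 by rewrite invr_ge0; lra.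
exists (Num.Def.archi_bound (1 - r0)^-1).
have := archi_boundP h0; set K := Num.Def.archi_bound _ => hK.
have hK1 : (1 - r0)^-1 < K.+1%:R by apply: lt_le_trans hK _; rewrite ler_nat.
have p : 0 < 1 - r0 by lra.
rewrite -ltf_pV2 ?posrE ?invr_gt0 ?ltr0n // invrK in hK1.
move: hK1; set q := K.+1%:R^-1; move=> hK1; lra.
Qed.

Lemma P1_P2 : compact_op Xs nX v (Hv0 v) T ->
  forall e : R, 0 < e -> exists r : R, r < 1 /\
    forall z, disk z -> r < normc z -> v z * adj z < e.
Proof.
move=> [_ Hc] e e0; apply: contrapT => Hneg.
have e20 : 0 < e / 2 by rewrite divr_gt0.
have H n : exists p : C * (C -> C), [/\ disk p.1, 1 - (n.+1%:R)^-1 < normc p.1,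
    Xs p.2, nX p.2 <= 1 & e / 2 < v p.1 * normc (T p.2 p.1)].
  apply: contrapT => Hn; apply: Hneg; exists (1 - (n.+1%:R)^-1); split.
    exact: rn_lt1.
  move=> z dz rz; rewrite ltNge; apply/negP => hz; apply: Hn.
  have vz := v_pos dz.
  have hz' : e / 2 < v z * adj z by lra.
  have : e / 2 / v z < adj z by rewrite ltr_pdivrMr // [adj z * _]mulrC.
  move/(sup_gt _ _ (adj_ne z)) => [y [[f [Xf nf] <-] hy]].
  exists (z, f); split => //=.
  by rewrite ltr_pdivrMr // in hy; rewrite [v z * _]mulrC.
have [p Hp] := choice H.
pose fs n := (p n).2; pose zs n := (p n).1.
have Hfs n : Xs (fs n) /\ nX (fs n) <= 1 by case: (Hp n).
have [phi [sphi [g [Hg0 Hconv]]]] := Hc fs Hfs.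
have e40 : 0 < e / 4 by rewrite divr_gt0.
have [_ H0] := Hg0; have [r0 [r01 Hr0]] := H0 _ e40.
have gHv := Hv0_Hv Hg0.
move/cvg0P: Hconv => Hconv; have [N HN] := Hconv _ e40.
have [K HK] := rn_big r01.
pose m := maxn N K.
have hm : (N <= m)%N by rewrite /m leq_maxl.
have hKm : (K <= phi m)%N by apply: leq_trans (subseq_ge sphi m); rewrite /m leq_maxr.
have [dz rz Xf nf hlow] := Hp (phi m).
have rz0 : r0 < normc (p (phi m)).1.
  apply: lt_le_trans HK _; apply: le_trans (rn_mono hKm) (ltW rz).
have hg := Hr0 _ dz rz0.
have hb := vbdd_sub v _ _ v_ge0 (T_vbdd (Hfs (phi m)).1) (Hv_vbdd gHv).
have := vnorm_ub _ _ _ hb dz => hu.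
have := HN m hm => hn.
have := ler_norm (vnorm v (fun w => T (fs (phi m)) w - g w)) => hn2.
have t := normcD (T (fs (phi m)) (p (phi m)).1 - g (p (phi m)).1) (g (p (phi m)).1).
rewrite subrK in t.
have v0 := v_ge0 dz.
have : v (p (phi m)).1 * normc (T (fs (phi m)) (p (phi m)).1) <=
    v (p (phi m)).1 * (normc (T (fs (phi m)) (p (phi m)).1 - g (p (phi m)).1) +
      normc (g (p (phi m)).1)) by exact: ler_wpM2l.
rewrite mulrDr /fs => hh.
move: hlow hh hu hn hn2 hg; rewrite /fs; lra.
Qed.
Lemma le0_eps (x : R) : (forall e : R, 0 < e -> x <= e) -> x <= 0.
Proof.
move=> H; rewrite leNgt; apply/negP => x0.
have := H (x / 2) (divr_gt0 x0 (ltr0Sn _ 1)); lra.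
Qed.

Lemma eq0_eps (z : C) : (forall e : R, 0 < e -> normc z <= e) -> z = 0.
Proof.
move=> H; apply/normc_eq0; apply/eqP; rewrite eq_le normc_ge0 andbT.
exact: le0_eps.
Qed.

Lemma rn_ge0 (n : nat) : 0 <= 1 - (n.+1%:R : R)^-1.
Proof. by rewrite subr_ge0 invf_le1 ?ltr0n // ler1n. Qed.

Lemma dil_cvg f z : holomorphic f -> disk z -> forall e : R, 0 < e ->
  exists N : nat, forall n, (N <= n)%N ->
    normc (dil (1 - (n.+1%:R)^-1) f z - f z) < e.
Proof.
move=> hf dz e e0.
have [del del0 Hdel] := @holo_cont f z hf dz e e0.
have hd : 1 - del < 1 by lra.
have [K HK] := rn_big hd.
exists K => n hn.
have nz0 := normc_ge0 z.
have nz1 : normc z < 1 by [].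
have hr0 := rn_ge0 n; have hr1 := rn_lt1 n.
have hK := rn_mono hn.
rewrite /dil; apply: Hdel.
  rewrite /disk /= normcM normcR ger0_norm //.
  have : (1 - n.+1%:R^-1) * normc z <= normc z by rewrite ler_piMl.
  by move=> h; exact: le_lt_trans h nz1.
have -> : (1 - n.+1%:R^-1)%:C * z - z = (- n.+1%:R^-1)%:C * z.
  case: z {dz nz0 nz1} => a b; simpc; apply/eqP; rewrite eq_complex /=; apply/andP; split; apply/eqP; ring.
rewrite normcM normcR normrN ger0_norm ?invr_ge0 ?ler0n //.
have : n.+1%:R^-1 * normc z <= n.+1%:R^-1 by rewrite ler_piMr ?invr_ge0 ?ler0n // ltW.
move: HK hK; set q := n.+1%:R^-1; set q' := K.+1%:R^-1; lra.
Qed.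
Hypothesis Hdil : forall f r, Xs f -> 0 <= r -> r < 1 -> Xs (dil r f).
Hypothesis HC0 : exists C0 : R, forall f r, Xs f -> 0 <= r -> r < 1 ->
     nX (dil r f) <= C0 * nX f.
Hypothesis Hdil0 : forall f r, Xs f -> 0 <= r -> r < 1 -> Hv0 v (T (dil r f)).

Lemma T_Hv0 : compact_op Xs nX v (Hv v) T -> forall f, Xs f -> Hv0 v (T f).
Proof.
move=> [HT Hc] f Xf.
have [C0 HC] := HC0.
have nf0 := nX_ge0 Xf.
pose a := `|C0| * nX f + 1.
have a0 : 0 < a by rewrite /a; have := normr_ge0 C0; nra.
pose c := a^-1.
have c0 : 0 < c by rewrite /c invr_gt0.
have ca : c * a = 1 by rewrite /c mulVf // lt0r_neq0.
pose rr (n : nat) : R := 1 - (n.+1%:R)^-1.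
pose fn n := dil (rr n) f.
have Xfn n : Xs (fn n) by apply: Hdil => //; [exact: rn_ge0 | exact: rn_lt1].
pose u n := fun w => c%:C * fn n w.
have Xu n : Xs (u n) by exact: Xs_scale.
have nu n : nX (u n) <= 1.
  rewrite nX_scale // normcR (ger0_norm (ltW c0)).
  have h1 : nX (fn n) <= C0 * nX f by apply: HC => //; [exact: rn_ge0 | exact: rn_lt1].
  have h2 : C0 * nX f <= `|C0| * nX f by apply: ler_wpM2r => //; exact: ler_norm.
  rewrite -ca; apply: ler_wpM2l; first exact: ltW.
  rewrite /a; lra.
have [phi [sphi [g [Hg Hconv]]]] := Hc u (fun n => conj (Xu n) (nu n)).
have Tu0 n : Hv0 v (T (u n)).
  split; first by case: Hint => -[h _] _; apply: h; exact: Xs_holo.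
  move=> e e0; have [_ H0] := Hdil0 Xf (rn_ge0 n) (rn_lt1 n).
  have [r [r1 Hr]] := H0 (e * a) (mulr_gt0 e0 a0).
  exists r; split => // z dz rz.
  rewrite T_scale // normcM normcR (ger0_norm (ltW c0)) mulrCA.
  have := Hr z dz rz => h.
  rewrite -[e]mul1r -ca -mulrA; rewrite ltr_pM2l //.
  by rewrite [a * e]mulrC.
have gHv0 : Hv0 v g.
  exact: (Hv0_closed (fun n => T_Hv (Xu (phi n))) (fun n => Tu0 (phi n)) Hg Hconv).
have := (Hi : initial_space Xs nX); case=> _ _ Hc2.
have [psi [spsi [f' [Xf' Hf']]]] := Hc2 (fun n => u (phi n)) (fun n => conj (Xu (phi n)) (nu (phi n))).
have sg n : (n <= phi (psi n))%N.
  apply: leq_trans (subseq_ge spsi n) (subseq_ge sphi (psi n)).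
have f'z z : disk z -> f' z = c%:C * f z.
  move=> dz; apply/eqP; rewrite -subr_eq0; apply/eqP; apply: eq0_eps => e e0.
  have e20 : 0 < e / 2 by rewrite divr_gt0.
  have s1 : [set z] `<=` @disk R by move=> w ->.
  have [N1 HN1] := Hf' [set (z : CT)] (@compact_set1 CT z) s1 _ e20.
  have [N2 HN2] := dil_cvg (Xs_holo Xf) dz (mulr_gt0 e20 a0).
  pose n := maxn N1 N2.
  have h1 := HN1 n (leq_maxl _ _) z erefl.
  have h2 := HN2 (phi (psi n)) (leq_trans (leq_maxr N1 N2) (sg n)).
  have t := normcD (f' z - u (phi (psi n)) z) (u (phi (psi n)) z - c%:C * f z).
  have -> : f' z - c%:C * f z = f' z - u (phi (psi n)) z + (u (phi (psi n)) z - c%:C * f z) by ring.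
  apply: (le_trans t).
  have -> : u (phi (psi n)) z - c%:C * f z = c%:C * (fn (phi (psi n)) z - f z) by rewrite /u; ring.
  rewrite normcM normcR (ger0_norm (ltW c0)).
  have h3 : c * normc (fn (phi (psi n)) z - f z) <= e / 2.
    have -> : e / 2 = c * (e / 2 * a) by rewrite mulrCA ca mulr1.
    by apply: ler_wpM2l; [exact: ltW c0 | exact: ltW h2].
  rewrite normcB in h1; lra.
have Tf' z : disk z -> T f' z = c%:C * T f z.
  move=> dz.
  have hX : Xs (fun w => (- c%:C) * f w + f' w) := Xs_lin _ Xf Xf'.
  have h0 : forall w, disk w -> (fun w => - c%:C * f w + f' w) w = 0.
    by move=> w dw /=; rewrite f'z //; ring.
  have := T_zero hX h0 dz; rewrite T_lin // => h.
  by apply/eqP; rewrite -subr_eq0 -h; apply/eqP; ring.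
have gz z : disk z -> g z = T f' z.
  move=> dz; apply/eqP; rewrite -subr_eq0; apply/eqP; apply: eq0_eps => e e0.
  have vz := v_pos dz.
  have e20 : 0 < e / 2 by rewrite divr_gt0.
  have s1 : [set (z : CT)] `<=` @disk R by move=> w ->.
  have Tc := T_cvg (fun n => Xu (phi (psi n))) Xf' Hf'.
  have [N1 HN1] := Tc [set (z : CT)] (@compact_set1 CT z) s1 _ e20.
  move/cvg0P: Hconv => Hconv.
  have [N2 HN2] := Hconv _ (mulr_gt0 vz e20).
  pose n := maxn N1 N2.
  pose m := psi n.
  have h1 := HN1 n (leq_maxl _ _) z erefl.
  have h2 := HN2 m (leq_trans (leq_maxr N1 N2) (subseq_ge spsi n)).
  have hb := vbdd_sub v _ _ v_ge0 (T_vbdd (Xu (phi m))) (Hv_vbdd Hg).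
  have hu := vnorm_ub _ _ _ hb dz.
  have h3 : normc (T (u (phi m)) z - g z) < e / 2.
    rewrite -(ltr_pM2l vz); apply: le_lt_trans hu _.
    exact: le_lt_trans (ler_norm _) h2.
  have -> : g z - T f' z = - (T (u (phi m)) z - g z) + (T (u (phi m)) z - T f' z) by ring.
  have t := normcD (- (T (u (phi m)) z - g z)) (T (u (phi m)) z - T f' z).
  rewrite normcN in t.
  move: h1; rewrite /m => h1; lra.
split; first by case: Hint => -[h _] _; apply: h; exact: Xs_holo.
move=> e e0; have [_ H0] := gHv0.
have [r [r1 Hr]] := H0 (e * c) (mulr_gt0 e0 c0).
exists r; split => // z dz rz.
have := Hr z dz rz; rewrite gz // Tf' // normcM normcR (ger0_norm (ltW c0)).
by rewrite mulrCA [e * c]mulrC ltr_pM2l.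
Qed.
Lemma P0_P1 : compact_op Xs nX v (Hv v) T -> compact_op Xs nX v (Hv0 v) T.
Proof.
move=> HC; split; first exact: T_Hv0.
move=> fs Hfs; have [phi [sphi [g [Hg Hconv]]]] := HC.2 fs Hfs.
exists phi; split => //; exists g; split => //.
exact: (Hv0_closed (fun n => T_Hv (Hfs (phi n)).1) (fun n => T_Hv0 HC (Hfs (phi n)).1) Hg Hconv).
Qed.
End Main.
End Basics.

Theorem theorem3p4 (R : realType) (v : R[i] -> R) (Xs : set (R[i] -> R[i]))
  (nX : (R[i] -> R[i]) -> R) (T : (R[i] -> R[i]) -> R[i] -> R[i]) :
  typical_weight v ->
  initial_space Xs nX ->
  (forall f r, Xs f -> 0 <= r -> r < 1 -> Xs (dil r f)) ->
  (exists C0 : R, forall f r, Xs f -> 0 <= r -> r < 1 ->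
     nX (dil r f) <= C0 * nX f) ->
  intrinsic T ->
  bounded_into_Hv Xs nX v T ->
  (forall f r, Xs f -> 0 <= r -> r < 1 -> Hv0 v (T (dil r f))) ->
  [<-> compact_op Xs nX v (Hv v) T;
       compact_op Xs nX v (Hv0 v) T;
       forall e : R, 0 < e -> exists r : R, r < 1 /\
         forall z, disk z -> r < normc z -> v z * adj_eval_norm Xs nX T z < e].

Proof.
move=> Htw Hi Hdil HC0 Hint Hb Hdil0.
split; [|split].
- by move=> H; apply: P0_P1.
- by move=> H; apply: P1_P2.
- by move=> H; apply: P2_P0.
Qed.
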